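(* Let $\Lambda=\mathbb Z[t^{\pm1}]$ and suppose $0\in W\subseteq\Lambda$. Then $W=\Lambda$ if and only if $W$ is closed under each of the following four binary operations: (1) $(w_1,w_2)\mapsto tw_1+(1-t)w_2$; (2) $(w_1,w_2)\mapsto 1+tw_1+(t-1)w_2$; (3) $(w_1,w_2)\mapsto t^{-1}w_1+(1-t^{-1})w_2$; (4) $(w_1,w_2)\mapsto -t^{-1}+t^{-1}w_1+(t^{-1}-1)w_2$. *)

(* Defs.v *)
(* Lambda = Z[t, t^-1] realised inside the fraction field
   {fraction {poly int}} = Q-free rational functions over Z, as the set of
   elements p / t^n with p in Z[t], n in N. *)
From HB Require Import structures.
From mathcomp Require Import all_boot all_order all_algebra fraction.
Set Implicit Arguments. Unset Strict Implicit. Unset Printing Implicit Defensive.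
Import Order.TTheory GRing.Theory Num.Theory.
Local Open Scope ring_scope.

Definition RF := {fraction {poly int}}.

Definition toF (p : {poly int}) : RF := @FracField.tofrac _ p.

Definition tL : RF := toF 'X.

Definition laurent (x : RF) : Prop :=
  exists (p : {poly int}) (n : nat), x = toF p / tL ^+ n.

(* Main.v *)
Require Import Defs.
From HB Require Import structures.
From mathcomp Require Import all_boot all_order all_algebra fraction.
Import GRing.Theory.
Local Open Scope ring_scope.

Lemma tL_neq0 : tL != 0.
Proof. by rewrite /tL /toF tofrac_eq0 polyX_eq0. Qed.

Lemma toFXn n : toF 'X^n = tL ^+ n.
Proof. by rewrite /toF tofracXn. Qed.

Lemma laurent_add x y : laurent x -> laurent y -> laurent (x + y).
Proof.
move=> [p [n ->]] [q [m ->]].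
exists (p * 'X^m + q * 'X^n), (n + m)%N.
have h := tL_neq0.
rewrite addf_div ?expf_neq0 //.
rewrite /toF tofracD !tofracM -/(toF 'X^m) -/(toF 'X^n) !toFXn exprD mulrC.
done.
Qed.

Lemma laurent_mul x y : laurent x -> laurent y -> laurent (x * y).
Proof.
move=> [p [n ->]] [q [m ->]].
exists (p * q), (n + m)%N.
by rewrite mulf_div /toF tofracM exprD.
Qed.

Lemma laurent_tLV : laurent tL^-1.
Proof. by exists 1, 1%N; rewrite /toF tofrac1 expr1 div1r. Qed.

Lemma laurent_opp x : laurent x -> laurent (- x).
Proof.
move=> [p [n ->]]; exists (- p), n.
by rewrite /toF tofracN mulNr.
Qed.

Lemma laurent_toF p : laurent (toF p).
Proof. by exists p, 0%N; rewrite expr0 divr1. Qed.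

Lemma laurent_tL : laurent tL.
Proof. exact: laurent_toF. Qed.

Lemma laurent_1 : laurent 1.
Proof. by have := laurent_toF 1; rewrite /toF tofrac1. Qed.
Theorem lemma14 (W : RF -> Prop)
  (hWsub : forall x, W x -> laurent x) (hW0 : W 0) :
  (forall x, W x <-> laurent x) <->
  [/\ (forall w1 w2, W w1 -> W w2 -> W (tL * w1 + (1 - tL) * w2)),
      (forall w1 w2, W w1 -> W w2 -> W (1 + tL * w1 + (tL - 1) * w2)),
      (forall w1 w2, W w1 -> W w2 -> W (tL^-1 * w1 + (1 - tL^-1) * w2)) &
      (forall w1 w2, W w1 -> W w2 -> W (- tL^-1 + tL^-1 * w1 + (tL^-1 - 1) * w2))].
Proof.
have h := tL_neq0.
split.
  move=> hW; have LA := laurent_add; have LM := laurent_mul; have LO := laurent_opp.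
  have L1 := laurent_1; have LT := laurent_tL; have LV := laurent_tLV.
  split=> w1 w2 /hW h1 /hW h2; apply/hW.
  - exact: LA (LM _ _ LT h1) (LM _ _ (LA _ _ L1 (LO _ LT)) h2).
  - exact: LA (LA _ _ L1 (LM _ _ LT h1)) (LM _ _ (LA _ _ LT (LO _ L1)) h2).
  - exact: LA (LM _ _ LV h1) (LM _ _ (LA _ _ L1 (LO _ LV)) h2).
  - exact: LA (LA _ _ (LO _ LV) (LM _ _ LV h1)) (LM _ _ (LA _ _ LV (LO _ L1)) h2).
move=> [f1 f2 f3 f4].
have mT x : W x -> W (tL * x).
  by move=> /(f1 _ _)/(_ hW0); rewrite mulr0 addr0.
have mTi x : W x -> W (tL^-1 * x).
  by move=> /(f3 _ _)/(_ hW0); rewrite mulr0 addr0.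
have inc x : W x -> W (x + 1).
  move=> /mTi /(f2 _ _)/(_ hW0); rewrite mulr0 addr0 mulrA mulfV // mul1r.
  by rewrite addrC.
have dec x : W x -> W (x - 1).
  move=> /(f4 _ _)/(_ hW0)/mT; rewrite mulr0 addr0 mulrDr mulrN mulfV // mulrA mulfV // mul1r.
  by rewrite addrC.
have addn x (n : nat) : W x -> W (x + n%:R) /\ W (x - n%:R).
  move=> Wx; elim: n => [|n [IH1 IH2]]; first by rewrite subr0 addr0.
  split; first by rewrite -natr1 addrA; apply: inc.
  by rewrite -natr1 opprD addrA; apply: dec.
have addc x (c : int) : W x -> W (x + c%:~R).
  move=> Wx; case: c => n.
    by have [] := addn x n Wx.
  rewrite NegzE mulrNz; have [] := addn x n.+1 Wx; done.
have poly p : W (toF p).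
  elim/poly_ind: p => [|p c IH]; first by rewrite /toF tofrac0.
  rewrite /toF tofracD tofracM -/(toF p) -/tL.
  have -> : c%:P = c%:~R :> {poly int}.
    by rewrite -[c in c%:P]intz rmorph_int.
  rewrite rmorph_int mulrC; apply: addc; exact: mT.
move=> x; split; first exact: hWsub.
move=> [p [n ->]]; elim: n => [|n IH]; first by rewrite expr0 divr1.
by rewrite exprS invfM mulrCA; apply: mTi.
Qed.
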